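(* Let $M=\sum_{n=1}^{\infty}\frac{2^{n-1}}{(3^{2/3})^n}=\frac{1}{3^{2/3}-2}$. Let the open intervals $J_n^k\subset[0,M]$ ($n\ge 1$, $1\le k\le 2^{n-1}$) and the set $A\subset[0,M]$ be constructed as follows: $J_1^1$ is the open interval of length $3^{-2/3}$ centered at the midpoint of $[0,M]$; for $n\ge 2$, the $2^{n-1}$ intervals $J_n^1,\dots,J_n^{2^{n-1}}$ are the open intervals of length $(3^{2/3})^{-n}$ centered at the midpoints of the $2^{n-1}$ connected components of $[0,M]\setminus(J_1\cup\dots\cup J_{n-1})$, where $J_m=\bigcup_{k=1}^{2^{m-1}}J_m^k$. (These intervals are pairwise disjoint.) Let $A=[0,M]\setminus\bigcup_{n\ge1}J_n$. Define $g:[0,M]\to\mathbb{R}$ by $g(x)=0$ for $x\in A$, and for $x\in J_n^k$, $$g(x)=\frac{4}{\mathcal{L}(J_n^k)^{1/2}}\,\mathrm{dist}(x,\partial J_n^k),$$ where $\mathcal{L}$ denotes Lebesgue measure (length). Then $g$ takes values in $[0,\infty)$ and: (1) $\max\{g(x): x\in J_n^k\}=2\,\mathcal{L}(J_n^k)^{1/2}$ for every $n,k$; (2) $g(x)=0$ if and only if $x\in A$; (3) $\int_{J_n^k}g(x)\,dx=\mathcal{L}(J_n^k)^{3/2}=\frac{1}{3^n}$ for every $n,k$, and $\int_0^M g(x)\,dx=1$; (4) $g$ is $\tfrac12$-Hölder continuous on $[0,M]$.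
   Context: $\mathcal{L}$ denotes one-dimensional Lebesgue measure; $\partial J$ denotes the set of endpoints of an interval $J$. *)

(* Defs.v *)
From HB Require Import structures.
From mathcomp Require Import all_boot all_order all_algebra.
From mathcomp Require Import all_classical all_reals all_analysis.
Set Implicit Arguments. Unset Strict Implicit. Unset Printing Implicit Defensive.
Import Order.TTheory GRing.Theory Num.Theory.
Import numFieldNormedType.Exports.
Local Open Scope classical_set_scope.
Local Open Scope ring_scope.

Section Construction.
Variable R : realType.

Definition rr : R := (3%:R : R) `^ (2%:R / 3%:R).

Definition MM : R := (rr - 2%:R)^-1.

Definition len (n : nat) : R := (rr ^+ n)^-1.

(* comps m = the list of the 2^m closed connected components [a,b]
   (stored as pairs (a,b)) of [0,M] \ (J_1 u ... u J_m), i.e. the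
   components in which the intervals of generation m+1 are placed. *)
Fixpoint comps (m : nat) : seq (R * R) :=
  match m with
  | 0 => [:: (0, MM)]
  | m'.+1 =>
      let l := len m in
      flatten [seq let c := (p.1 + p.2) / 2%:R in
                   [:: (p.1, c - l / 2%:R); (c + l / 2%:R, p.2)]
              | p <- comps m']
  end.

(* J_n^k for n >= 1 and 1 <= k <= 2^(n-1): the open interval of length
   len n centred at the midpoint of the k-th component of comps (n-1). *)
Definition Jcomp (n k : nat) : R * R := nth (0, 0) (comps n.-1) k.-1.
Definition Jmid (n k : nat) : R := ((Jcomp n k).1 + (Jcomp n k).2) / 2%:R.
Definition Jleft (n k : nat) : R := Jmid n k - len n / 2%:R.
Definition Jright (n k : nat) : R := Jmid n k + len n / 2%:R.
Definition J (n k : nat) : set R := `]Jleft n k, Jright n k[.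

Definition valid_index (nk : nat * nat) : Prop :=
  (1 <= nk.1)%N /\ (1 <= nk.2 <= 2 ^ nk.1.-1)%N.

Definition AA : set R :=
  `[0, MM] `\` [set x | exists nk, valid_index nk /\ J nk.1 nk.2 x].

Definition LJ (n k : nat) : R := fine (lebesgue_measure (J n k)).

Definition distbd (n k : nat) (x : R) : R :=
  Num.min `|x - Jleft n k| `|x - Jright n k|.

(* g(x) = 4 / L(J_n^k)^(1/2) * dist(x, dJ_n^k) if x in J_n^k, 0 otherwise
   (the J_n^k being pairwise disjoint, the index (n,k) is unique). *)
Definition gg (x : R) : R :=
  let nk := xget (0%N, 0%N) [set nk | valid_index nk /\ J nk.1 nk.2 x] in
  if pselect (valid_index nk /\ J nk.1 nk.2 x) then
    4%:R / Num.sqrt (LJ nk.1 nk.2) * distbd nk.1 nk.2 x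
  else 0.

End Construction.

Arguments gg {R} x.
Arguments distbd {R} n k x.
Arguments J R n k : clear implicits.
Arguments LJ R n k : clear implicits.
Arguments AA R : clear implicits.
Arguments MM R : clear implicits.
Arguments rr R : clear implicits.

(* Main.v *)
Require Import Defs.
From HB Require Import structures.
From mathcomp Require Import all_boot all_order all_algebra.
From mathcomp Require Import all_classical all_reals all_analysis.
From mathcomp Require Import ring lra measurable_realfun.
Set Implicit Arguments. Unset Strict Implicit. Unset Printing Implicit Defensive.
Import Order.TTheory GRing.Theory Num.Theory.
Import numFieldNormedType.Exports.
Local Open Scope classical_set_scope.
Local Open Scope ring_scope.
Section S.
Variable R : realType.
Local Notation r := (rr R).
Local Notation M := (MM R).

Lemma r_cube : r ^+ 3 = 9%:R :> R.
Proof.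
rewrite /rr -powR_mulrn ?powR_ge0// -powRrM.
have -> : (2%:R / 3%:R * 3%:R : R) = 2%:R by rewrite divfK// pnatr_eq0.
by rewrite powR_mulrn// expr2 -natrM.
Qed.

Lemma r_gt2 : 2%:R < r.
Proof.
have r0 : 0 <= r by rewrite /rr powR_ge0.
rewrite ltNge; apply/negP => h.
have : r ^+ 3 <= 2%:R ^+ 3 by rewrite lerXn2r// nnegrE.
by rewrite r_cube -natrX ler_nat.
Qed.

Lemma r_gt0 : 0 < r.
Proof. exact: lt_trans r_gt2. Qed.

Lemma M_gt0 : 0 < M.
Proof. by rewrite /MM invr_gt0 subr_gt0 r_gt2. Qed.

Lemma len_gt0 n : 0 < len R n.
Proof. by rewrite /len invr_gt0 exprn_gt0// r_gt0. Qed.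

Definition cc (m : nat) : R := M / r ^+ m.

Lemma cc_gt0 m : 0 < cc m.
Proof. by rewrite /cc divr_gt0 ?M_gt0// exprn_gt0// r_gt0. Qed.

Lemma cc_rec m : cc m.+1 = (cc m - len R m.+1) / 2%:R.
Proof.
have r0 : r != 0 by rewrite gt_eqF// r_gt0.
have r2 : r - 2%:R != 0 by rewrite subr_eq0 gt_eqF// r_gt2.
have rm : r ^+ m != 0 by rewrite expf_neq0.
rewrite /cc /len /MM exprS; field.
by rewrite r0 rm r2.
Qed.

Lemma len_lt_cc m : len R m.+1 < cc m.
Proof.
have r0 := r_gt0.
rewrite /cc /len exprS invfM ltr_pM2r ?invr_gt0 ?exprn_gt0//.
rewrite /MM ltf_pV2 ?posrE ?subr_gt0 ?r_gt2//.
by rewrite ltrBlDr ltrDl.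
Qed.

End S.
Section S2.
Variable R : realType.
Local Notation r := (rr R).
Local Notation M := (MM R).

Lemma size_flat2 (T : Type) (f g : T -> T) (s : seq T) :
  size (flatten [seq [:: f p; g p] | p <- s]) = (size s).*2.
Proof. by elim: s => //= x s ->. Qed.

Lemma nth_flat2 (T : Type) (d : T) (f g : T -> T) (s : seq T) i :
  (i < size s)%N ->
  nth d (flatten [seq [:: f p; g p] | p <- s]) i.*2 = f (nth d s i) /\
  nth d (flatten [seq [:: f p; g p] | p <- s]) i.*2.+1 = g (nth d s i).
Proof.
elim: s i => [//|x s IH] [|i] //= hi.
by apply: IH.
Qed.

Lemma size_comps m : size (comps R m) = (2 ^ m)%N.
Proof.
elim: m => [//|m IH] /=.
by rewrite (size_flat2 (fun p => (p.1, (p.1 + p.2) / 2%:R - len R m.+1 / 2%:R))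
  (fun p => ((p.1 + p.2) / 2%:R + len R m.+1 / 2%:R, p.2))) IH expnS mul2n.
Qed.

Definition lt_ m i : R := (nth (0, 0) (comps R m) i).1.
Definition rt_ m i : R := (nth (0, 0) (comps R m) i).2.

Lemma comps_ev m i : (i < 2 ^ m)%N ->
  lt_ m.+1 i.*2 = lt_ m i /\
  rt_ m.+1 i.*2 = (lt_ m i + rt_ m i) / 2%:R - len R m.+1 / 2%:R /\
  lt_ m.+1 i.*2.+1 = (lt_ m i + rt_ m i) / 2%:R + len R m.+1 / 2%:R /\
  rt_ m.+1 i.*2.+1 = rt_ m i.
Proof.
move=> hi.
have hs : (i < size (comps R m))%N by rewrite size_comps.
have [h1 h2] := nth_flat2 (0,0)
  (fun p => (p.1, (p.1 + p.2) / 2%:R - len R m.+1 / 2%:R))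
  (fun p => ((p.1 + p.2) / 2%:R + len R m.+1 / 2%:R, p.2))
  hs.
by rewrite /lt_ /rt_ /= h1 h2.
Qed.

Lemma half_split m i : (i < 2 ^ m.+1)%N ->
  (i./2 < 2 ^ m)%N /\ (i = (i./2).*2 \/ i = (i./2).*2.+1).
Proof.
move=> hi; split.
  by rewrite ltn_half_double -mul2n -expnS.
rewrite -[X in X = _ \/ _]odd_double_half -[X in _ \/ X = _]odd_double_half.
by case: (odd i); [right|left].
Qed.

Lemma half_ex m i : (i < 2 ^ m.+1)%N ->
  exists j, (j < 2 ^ m)%N /\ (i = j.*2 \/ i = j.*2.+1).
Proof. by move=> /half_split [h1 h2]; exists i./2. Qed.

Lemma width m i : (i < 2 ^ m)%N -> rt_ m i - lt_ m i = cc R m.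
Proof.
elim: m i => [|m IH] i hi.
  rewrite expn0 ltnS leqn0 in hi; rewrite (eqP hi) /rt_ /lt_ /cc /= expr0 divr1.
  by rewrite subr0.
have [j [hj [->|->]]] := half_ex hi; have [e1 [e2 [e3 e4]]] := comps_ev hj;
  have := IH _ hj; rewrite cc_rec => <-.
  by rewrite e1 e2; field.
by rewrite e3 e4; field.
Qed.

Lemma lt_le_rt m i : (i < 2 ^ m)%N -> lt_ m i <= rt_ m i.
Proof. by move=> hi; rewrite -subr_ge0 width// ltW// cc_gt0. Qed.

Lemma order_succ m i : (i.+1 < 2 ^ m)%N -> rt_ m i < lt_ m i.+1.
Proof.
elim: m i => [|m IH] i hi.
  by rewrite expn0 in hi.
have hi' : (i < 2 ^ m.+1)%N by apply: ltn_trans hi.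
have [j [hj e]] := half_ex hi'; have [e1 [e2 [e3 e4]]] := comps_ev hj.
move: hi; case: e => -> hi.
  rewrite e2 e3.
  by rewrite ltrD2l gtrN// divr_gt0 ?len_gt0.
rewrite -doubleS e4.
have hj1 : (j.+1 < 2 ^ m)%N.
  by rewrite -ltn_double doubleS -[X in (_ < X)%N]mul2n -expnS.
have [f1 _] := comps_ev hj1.
rewrite f1; apply: IH => //.
Qed.

Lemma order m i j : (i < j)%N -> (j < 2 ^ m)%N -> rt_ m i < lt_ m j.
Proof.
elim: j => [//|j IH] hij hj.
rewrite ltnS leq_eqVlt in hij; case/orP: hij => [/eqP->|hij].
  exact: order_succ.
apply: (lt_trans (IH hij (ltn_trans (ltnSn j) hj))).
apply: (le_lt_trans (lt_le_rt (ltn_trans (ltnSn j) hj))).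
exact: order_succ.
Qed.

Lemma contain1 m i : (i < 2 ^ m.+1)%N ->
  lt_ m i./2 <= lt_ m.+1 i /\ rt_ m.+1 i <= rt_ m i./2.
Proof.
move=> hi; have [j [hj [->|->]]] := half_ex hi; have [e1 [e2 [e3 e4]]] := comps_ev hj;
  have w := width hj; have c := len_lt_cc R m; have l0 := len_gt0 R m.+1;
  have c0 := cc_gt0 R m.
  rewrite doubleK e1 e2; split => //; lra.
rewrite -[(j.*2.+1)./2]/(uphalf j.*2) uphalf_double e3 e4; split => //; lra.
Qed.

Lemma contain n d i : (i < 2 ^ (n + d))%N ->
  lt_ n (i %/ 2 ^ d) <= lt_ (n + d) i /\ rt_ (n + d) i <= rt_ n (i %/ 2 ^ d).
Proof.
elim: d i => [|d IH] i hi.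
  by rewrite expn0 divn1 addn0.
rewrite addnS in hi *.
have [c1 c2] := contain1 hi.
have [hj _] := half_split hi.
have [d1 d2] := IH _ hj.
have -> : (i %/ 2 ^ d.+1 = i./2 %/ 2 ^ d)%N by rewrite expnS divnMA -divn2.
split; [exact: le_trans c1|exact: le_trans d2].
Qed.

End S2.
Section S3.
Variable R : realType.
Local Notation M := (MM R).

Lemma J_mem n k (x : R) : J R n k x <-> Jleft R n k < x < Jright R n k.
Proof. by rewrite /J /= in_itv /=. Qed.

Lemma valid_ex nk : valid_index nk ->
  exists m i, nk = (m.+1, i.+1) /\ (i < 2 ^ m)%N.
Proof.
case: nk => n k [] /= hn /andP[hk hk'].
case: n hn hk' => [//|m] _ hk'; case: k hk hk' => [//|i] _ hk'.
by exists m, i.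
Qed.

Lemma J_eq m i : (i < 2 ^ m)%N ->
  Jleft R m.+1 i.+1 = rt_ R m.+1 i.*2 /\ Jright R m.+1 i.+1 = lt_ R m.+1 i.*2.+1.
Proof.
move=> hi; have [e1 [e2 [e3 e4]]] := comps_ev R hi.
by rewrite e2 e3.
Qed.

Lemma J_parent m i : (i < 2 ^ m)%N ->
  lt_ R m i <= Jleft R m.+1 i.+1 /\ Jright R m.+1 i.+1 <= rt_ R m i.
Proof.
move=> hi; have [e1 [e2 [e3 e4]]] := comps_ev R hi.
have [j1 j2] := J_eq hi.
have h2 : (i.*2 < 2 ^ m.+1)%N by rewrite expnS mul2n ltn_double.
have h3 : (i.*2.+1 < 2 ^ m.+1)%N by rewrite expnS mul2n -doubleS leq_double.
rewrite j1 j2 -e1 -e4; split; exact: lt_le_rt.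
Qed.

Lemma lt_mono m i j : (i <= j)%N -> (j < 2 ^ m)%N -> lt_ R m i <= lt_ R m j.
Proof.
rewrite leq_eqVlt => /orP[/eqP->//|hij] hj.
apply: le_trans (lt_le_rt R (ltn_trans hij hj)) _.
exact/ltW/order.
Qed.

Lemma rt_mono m i j : (i <= j)%N -> (j < 2 ^ m)%N -> rt_ R m i <= rt_ R m j.
Proof.
rewrite leq_eqVlt => /orP[/eqP->//|hij] hj.
apply: (le_trans _ (lt_le_rt R hj)).
exact/ltW/order.
Qed.

Lemma J_in_parent m i x : (i < 2 ^ m)%N -> J R m.+1 i.+1 x ->
  lt_ R m i < x < rt_ R m i.
Proof.
move=> hi /J_mem /andP[h1 h2]; have [p1 p2] := J_parent hi.
by rewrite (le_lt_trans p1 h1) (lt_le_trans h2 p2).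
Qed.

Lemma J_sub01 n k x : valid_index (n, k) -> J R n k x -> 0 < x < M.
Proof.
move=> /valid_ex [m [i [[-> ->] hi]]] /(J_in_parent hi) /andP[h1 h2].
have hi' : (i < 2 ^ (0 + m))%N by [].
have [c1 c2] := contain R hi'.
have e : (i %/ 2 ^ m = 0)%N by rewrite divn_small.
rewrite e /= in c1 c2.
rewrite (le_lt_trans c1 h1) (lt_le_trans h2 c2) //.
Qed.

Lemma J_disj_same m i i' x : (i < i')%N -> (i' < 2 ^ m)%N ->
  J R m.+1 i.+1 x -> J R m.+1 i'.+1 x -> False.
Proof.
move=> hii' hi' /J_mem /andP[_ h1] /J_mem /andP[h2 _].
have hi : (i < 2 ^ m)%N by apply: ltn_trans hi'.
have [_ e1] := J_eq hi; have [e2 _] := J_eq hi'.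
rewrite e1 in h1; rewrite e2 in h2.
have h3 : (i'.*2 < 2 ^ m.+1)%N by rewrite expnS mul2n ltn_double.
have h4 : (i.*2.+1 < i'.*2)%N by rewrite -doubleS leq_double.
have := order R h4 h3.
have := lt_le_rt R (ltn_trans h4 h3).
have := lt_le_rt R h3.
move=> a b c.
have := lt_trans h2 h1.
apply/negP; rewrite -leNgt.
apply: le_trans b (le_trans (ltW c) a).
Qed.

Lemma J_disj_lt m i m' i' x : (m < m')%N -> (i < 2 ^ m)%N -> (i' < 2 ^ m')%N ->
  J R m.+1 i.+1 x -> J R m'.+1 i'.+1 x -> False.
Proof.
move=> hm hi hi' hx /(J_in_parent hi') /andP[y1 y2].
have [d ed] : exists d, m' = (m.+1 + d)%N by exists (m' - m.+1)%N; rewrite subnKC.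
subst m'.
have [c1 c2] := contain R hi'.
set j := (i' %/ 2 ^ d)%N in c1 c2.
have hj : (j < 2 ^ m.+1)%N by rewrite ltn_divLR ?expn_gt0// -expnD.
move/J_mem: hx => /andP[x1 x2].
have [e1 e2] := J_eq hi.
rewrite e1 in x1; rewrite e2 in x2.
have h2 : (i.*2 < 2 ^ m.+1)%N by rewrite expnS mul2n ltn_double.
have h3 : (i.*2.+1 < 2 ^ m.+1)%N by rewrite expnS mul2n -doubleS leq_double.
case: (leqP j i.*2) => hji.
  have := rt_mono hji h2.
  move=> a; have := lt_trans (lt_le_trans y2 (le_trans c2 a)) x1.
  by rewrite ltxx.
have := lt_mono hji hj.
move=> a; have := lt_trans x2 (le_lt_trans (le_trans a c1) y1).
by rewrite ltxx.
Qed.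

Lemma J_disj n k n' k' : valid_index (n, k) -> valid_index (n', k') ->
  (n, k) <> (n', k') -> J R n k `&` J R n' k' = set0.
Proof.
move=> /valid_ex [m [i [[-> ->] hi]]] /valid_ex [m' [i' [[-> ->] hi']]] hne.
apply/seteqP; split => // x [hx hx'].
case: (ltngtP m m') => hm.
- exact: (J_disj_lt hm hi hi' hx hx').
- exact: (J_disj_lt hm hi' hi hx' hx).
subst m'.
case: (ltngtP i i') => hii.
- exact: (J_disj_same hii hi' hx hx').
- exact: (J_disj_same hii hi hx' hx).
by subst i'.
Qed.

End S3.
Section S4.
Variable R : realType.
Local Notation mu := (@lebesgue_measure R).

Definition quadF (c w : R) : R -> R := cst (c / 2%:R) * ((id - cst w) * (id - cst w)).

Lemma quadF_val c w y : quadF c w y = c / 2%:R * ((y - w) * (y - w)).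
Proof. by []. Qed.

Lemma quad_derive (c w x : R) : is_derive x 1 (quadF c w) (c * (x - w)).
Proof.
rewrite /quadF; apply: is_derive_eq.
rewrite /GRing.scale /= mulr0 addr0.
have e : (id - cst w) x = x - w by []. rewrite e.
by field.
Qed.

Lemma quad_cont (c w : R) : continuous (quadF c w).
Proof.
move=> x; apply: (@differentiable_continuous _ _ (R : normedModType R)).
apply/derivable1_diffP.
by have [] := quad_derive c w x.
Qed.

Lemma int_lin (f : R -> R) (u v c w : R) : u < v -> continuous f ->
  {in `]u, v[, forall x, f x = c * (x - w)} ->
  (\int[mu]_(x in `[u, v]) (f x)%:E = (c / 2%:R * ((v - w) * (v - w) - (u - w) * (u - w)))%:E)%E.
Proof.
move=> uv cf hf.
rewrite (@continuous_FTC2 _ _ (quadF c w)) //.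
- by rewrite -EFinB !quadF_val; congr (_%:E); ring.
- exact/continuous_subspaceT.
- split.
  + by move=> x _; have [] := quad_derive c w x.
  + by apply: cvg_at_right_filter; exact: quad_cont.
  + by apply: cvg_at_left_filter; exact: quad_cont.
- move=> x hx; rewrite derive1E hf//.
  by have [_ ->] := quad_derive c w x.
Qed.

End S4.
Section S5.
Variable R : realType.
Local Notation mu := (@lebesgue_measure R).

Lemma Jlen n k : Jright R n k - Jleft R n k = len R n.
Proof. rewrite /Jright /Jleft; lra. Qed.

Lemma Jlt n k : Jleft R n k < Jright R n k.
Proof. by rewrite -subr_gt0 Jlen len_gt0. Qed.

Lemma LJ_eq n k : LJ R n k = len R n.
Proof.
rewrite /LJ /J lebesgue_measure_itv /= lte_fin Jlt -EFinB /=.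
by rewrite Jlen.
Qed.

Lemma gg_J n k x : valid_index (n, k) -> J R n k x ->
  gg x = 4%:R / Num.sqrt (len R n) * Num.min (x - Jleft R n k) (Jright R n k - x).
Proof.
move=> v jx; rewrite /gg.
have -> : xget (0%N, 0%N) [set nk | valid_index nk /\ J R nk.1 nk.2 x] = (n, k).
  apply: xget_unique => // -[n' k'] /= [v' j'].
  case: (eqVneq (n', k') (n, k)) => // /eqP hne.
  have := J_disj R v' v hne.
  move/seteqP => [/(_ x) h _]; by case: (h (conj j' jx)).
case: pselect => /= [_|[]]; last by split.
rewrite LJ_eq /distbd.
move/J_mem: jx => /andP[h1 h2].
rewrite (ger0_norm (x := x - _)) ?subr_ge0 ?(ltW h1)//.
by rewrite distrC ger0_norm// subr_ge0 ltW.
Qed.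

Lemma gg_out x : (forall n k, valid_index (n, k) -> ~ J R n k x) -> gg x = 0 :> R.
Proof.
move=> h; rewrite /gg; case: pselect => //= -[v j].
by case: (h _ _ v j).
Qed.

End S5.
Section S6.
Variable R : realType.

Lemma aux_sqrt (d t L : R) : 0 <= d -> d <= t -> d <= L -> 0 < L ->
  4%:R / Num.sqrt L * d <= 4%:R * Num.sqrt t.
Proof.
move=> d0 dt dL L0.
have sL : 0 < Num.sqrt L by rewrite sqrtr_gt0.
have t0 : 0 <= t by apply: le_trans dt.
rewrite mulrAC ler_pdivrMr // -mulrA ler_pM2l// -sqrtrM//.
rewrite -(ger0_norm d0) -sqrtr_sqr; apply: ler_wsqrtr.
by rewrite expr2 ler_pM.
Qed.

Lemma min_lip (a b x y : R) :
  `|Num.min (x - a) (b - x) - Num.min (y - a) (b - y)| <= `|x - y|.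
Proof.
rewrite !minEle; case: (leP (x - a) (b - x)) => h1; case: (leP (y - a) (b - y)) => h2;
  (case: (lerP 0 (x - y)) => h; [rewrite (ger0_norm h)|rewrite (ltr0_norm h)]);
  rewrite ler_norml; apply/andP; split; lra.
Qed.

Lemma gg_ge0 (x : R) : 0 <= gg x.
Proof.
rewrite /gg; case: pselect => h //.
by rewrite mulr_ge0 ?divr_ge0 ?sqrtr_ge0// /distbd le_min !normr_ge0.
Qed.

Lemma gg_bound_out n k (x y : R) : valid_index (n, k) -> J R n k x -> ~ J R n k y ->
  gg x <= 4%:R * Num.sqrt `|x - y|.
Proof.
move=> v jx jy; rewrite (gg_J v jx).
move/J_mem: (jx) => /andP[h1 h2].
have ny : y <= Jleft R n k \/ Jright R n k <= y.
  case: (leP y (Jleft R n k)) => hy; first by left.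
  case: (leP (Jright R n k) y) => hy'; first by right.
  by case: jy; apply/J_mem; rewrite hy hy'.
have L := Jlen R n k; have L0 := len_gt0 R n.
apply: aux_sqrt => //.
- by rewrite le_min !subr_ge0 !ltW.
- case: ny => hy.
    by rewrite ge_min; apply/orP; left; rewrite (le_trans _ (ler_norm _))// lerD2l lerN2.
  rewrite ge_min; apply/orP; right; rewrite distrC (le_trans _ (ler_norm _))//.
  by rewrite lerD2r.
- by rewrite ge_min; apply/orP; left; lra.
Qed.

Lemma gg_bound_in n k (x y : R) : valid_index (n, k) -> J R n k x -> J R n k y ->
  `|gg x - gg y| <= 4%:R * Num.sqrt `|x - y|.
Proof.
move=> v jx jy; rewrite (gg_J v jx) (gg_J v jy) -mulrBr normrM.
have L0 := len_gt0 R n.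
have sL : 0 < Num.sqrt (len R n) by rewrite sqrtr_gt0.
rewrite (ger0_norm (x := 4%:R / _)); last by rewrite divr_ge0 ?ltW.
apply: le_trans (ler_wpM2l _ (min_lip _ _ _ _)) _; first by rewrite divr_ge0 ?ltW.
apply: aux_sqrt => //.
move/J_mem: jx => /andP[h1 h2]; move/J_mem: jy => /andP[h3 h4].
have L := Jlen R n k.
rewrite ler_norml; apply/andP; split; lra.
Qed.

Lemma gg_bound_gen (x y : R) :
  ~ (exists n k, valid_index (n, k) /\ J R n k x /\ J R n k y) ->
  gg x <= 4%:R * Num.sqrt `|x - y|.
Proof.
move=> nb.
have [[n [k [v jx]]]|nx] := pselect (exists n k, valid_index (n, k) /\ J R n k x).
  apply: (gg_bound_out v jx) => jy; apply: nb; by exists n, k.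
rewrite gg_out ?mulr_ge0 ?sqrtr_ge0// => n k v jx; apply: nx; by exists n, k.
Qed.

Lemma holder (x y : R) : `|gg x - gg y| <= 4%:R * Num.sqrt `|x - y|.
Proof.
have [[n [k [v [jx jy]]]]|nb] :=
  pselect (exists n k, valid_index (n, k) /\ J R n k x /\ J R n k y).
  exact: gg_bound_in v jx jy.
have hx := gg_bound_gen nb.
have hy : gg y <= 4%:R * Num.sqrt `|x - y|.
  rewrite distrC; apply: gg_bound_gen => -[n [k [v [a b]]]]; apply: nb.
  by exists n, k.
have := gg_ge0 x; have := gg_ge0 y.
move=> a b; rewrite ler_norml; apply/andP; split; lra.
Qed.

Lemma small_aux (a e : R) : 0 < e -> `|a| < (e / 4%:R) ^+ 2 -> 4%:R * Num.sqrt `|a| < e.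
Proof.
move=> e0 ht.
have : Num.sqrt `|a| < Num.sqrt ((e / 4%:R) ^+ 2).
  have e4 : 0 < e / 4%:R by rewrite divr_gt0.
  have e42 : 0 < (e / 4%:R) ^+ 2 by rewrite exprn_gt0.
  by rewrite (ltr_sqrt _ e42).
rewrite sqrtr_sqr (ger0_norm (x := e / 4%:R)); last by rewrite divr_ge0 ?ltW.
move=> h.
have : 4%:R * Num.sqrt `|a| < 4%:R * (e / 4%:R) by rewrite ltr_pM2l.
by rewrite [4%:R * (e / _)]mulrC divfK// pnatr_eq0.
Qed.

Lemma gg_cont : continuous (gg : R -> R).
Proof.
move=> x; apply/cvgrPdist_lt => e e0.
apply/nbhs_ballP; exists ((e / 4%:R) ^+ 2) => [|t /= ht]; first by rewrite /= exprn_gt0// divr_gt0.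
apply: le_lt_trans (holder x t) _.
exact: small_aux.
Qed.

End S6.
Section S7.
Variable R : realType.
Local Notation mu := (@lebesgue_measure R).

Lemma mgg (D : set R) : measurable_fun D (EFin \o (@gg R)).
Proof.
apply/measurable_EFinP; apply: measurable_funTS.
exact: continuous_measurable_fun (@gg_cont R).
Qed.

Lemma int_J n k : valid_index (n, k) ->
  (\int[mu]_(x in J R n k) (gg x)%:E =
   (4%:R / Num.sqrt (len R n) * (len R n * len R n) / 4%:R)%:E)%E.
Proof.
move=> v.
have ab := Jlt R n k; have L := Jlen R n k; have L0 := len_gt0 R n.
set a := Jleft R n k in ab L *; set b := Jright R n k in ab L *.
set K := 4%:R / Num.sqrt (len R n).
have gJ x : a < x < b -> gg x = K * Num.min (x - a) (b - x).
  by move=> h; rewrite (gg_J v) //; apply/J_mem.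
set m := (a + b) / 2%:R.
have em : 2%:R * m = a + b by rewrite /m; field.
have am : a < m by rewrite /m; lra.
have mb : m < b by rewrite /m; lra.
rewrite /J -/a -/b (@itv_bndbnd_setU _ _ _ (BRight m)); last 2 first.
  by rewrite bnd_simp ltW.
  by rewrite bnd_simp.
rewrite integral_setU //; last 2 first.
- exact: mgg.
- rewrite disj_set2E; apply/eqP/seteqP; split => // x [] /=.
  by rewrite !in_itv/= => /andP[_ h1] /andP[h2 _]; lra.
rewrite integral_itv_bndoo; last exact: mgg.
rewrite -(integral_itv_bndoo true false); last exact: mgg.
rewrite -[X in (_ + X)%E](integral_itv_bndoo true false); last exact: mgg.
rewrite (@int_lin _ gg a m K a) //; last 2 first.
- exact: gg_cont.
- move=> x; rewrite in_itv/= => /andP[h1 h2].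
  have hx : a < x < b by apply/andP; split; lra.
  rewrite (gJ x hx).
  have -> : Num.min (x - a) (b - x) = x - a by apply: min_l; lra.
  by [].
rewrite (@int_lin _ gg m b (- K) b) //; last 2 first.
- exact: gg_cont.
- move=> x; rewrite in_itv/= => /andP[h1 h2].
  have hx : a < x < b by apply/andP; split; lra.
  rewrite (gJ x hx).
  have -> : Num.min (x - a) (b - x) = b - x by apply: min_r; lra.
  by rewrite mulNr -mulrN opprB.
rewrite -EFinD; congr (_%:E).
have eb : b = a + len R n by lra.
by rewrite /m eb; field.
Qed.

End S7.
Section S8.
Variable R : realType.
Local Notation mu := (@lebesgue_measure R).
Local Notation r := (rr R).

Lemma pow32 (L : R) : 0 < L -> L `^ (3%:R / 2%:R) = L * Num.sqrt L.
Proof.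
move=> L0.
have -> : (3%:R / 2%:R : R) = 1 + 2^-1 by field.
rewrite powRD; last by apply/implyP => _; rewrite gt_eqF.
by rewrite powRr1 ?ltW// powR12_sqrt ?ltW.
Qed.

Lemma tent_simpl (L : R) : 0 < L -> 4%:R / Num.sqrt L * (L * L) / 4%:R = L * Num.sqrt L.
Proof.
move=> L0.
have hs : Num.sqrt L ^+ 2 = L by rewrite sqr_sqrtr ?ltW.
have s0 : Num.sqrt L != 0 by rewrite gt_eqF// sqrtr_gt0.
move: hs s0; set s := Num.sqrt L => hs s0.
rewrite -hs; field; by rewrite s0.
Qed.

Lemma len_pow n : len R n * Num.sqrt (len R n) = (3%:R ^+ n)^-1.
Proof.
have L0 := len_gt0 R n.
have h1 : 0 <= len R n * Num.sqrt (len R n) by rewrite mulr_ge0 ?sqrtr_ge0 ?ltW.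
have h2 : 0 <= (3%:R ^+ n : R)^-1 by rewrite invr_ge0 exprn_ge0.
apply/eqP; rewrite -(@eqrXn2 _ 2 _ _ _ h1 h2)//; apply/eqP.
rewrite exprMn sqr_sqrtr ?ltW// -exprSr /len -!exprVn -!exprM.
rewrite !exprVn; congr (_^-1).
rewrite mulnC exprM r_cube mulnC exprM.
by congr (_ ^+ n); rewrite expr2 -natrM.
Qed.

Lemma int_J3 n k : valid_index (n, k) ->
  (\int[mu]_(x in J R n k) (gg x)%:E = ((3%:R ^+ n)^-1)%:E)%E.
Proof. by move=> v; rewrite int_J// tent_simpl ?len_gt0// len_pow. Qed.

Lemma LJ32 n k : LJ R n k `^ (3%:R / 2%:R) = (3%:R ^+ n)^-1.
Proof. by rewrite LJ_eq pow32 ?len_gt0// len_pow. Qed.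

Definition Fn (i : nat) : set R := \big[setU/set0]_(k <- index_iota 0 (2 ^ i)) J R i.+1 k.+1.

Lemma Fn_mem i x : Fn i x <-> exists k, (k < 2 ^ i)%N /\ J R i.+1 k.+1 x.
Proof.
rewrite /Fn -bigcup_seq; split.
  by move=> [k /= hk jx]; exists k; split => //; move: hk; rewrite mem_index_iota.
by move=> [k [hk jx]]; exists k => //=; rewrite mem_index_iota.
Qed.

Lemma valid_of i k : (k < 2 ^ i)%N -> valid_index (i.+1, k.+1).
Proof. by move=> hk; split => //=; rewrite ltnS leq0n. Qed.

Lemma int_Fn i : (\int[mu]_(x in Fn i) (gg x)%:E = ((2 ^ i)%:R * (3%:R ^+ i.+1)^-1)%:E)%E.
Proof.
rewrite /Fn ge0_integral_bigsetU //=.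
- rewrite big_seq_cond (eq_bigr (fun _ => ((3%:R ^+ i.+1)^-1)%:E)); last first.
    move=> k; rewrite andbT mem_index_iota => /andP[_ hk].
    exact/int_J3/valid_of.
  rewrite -big_seq_cond sumEFin; congr (_%:E).
  by rewrite sumr_const_nat subn0 mulr_natl.
- by move=> k; exact: measurable_itv.
- exact: iota_uniq.
- move=> k k' /= hk hk' [x [a b]].
  move: hk hk'; rewrite !mem_index_iota => /andP[_ hk] /andP[_ hk'].
  case: (eqVneq k k') => // /eqP hne.
  have hne' : (i.+1, k.+1) <> (i.+1, k'.+1) by case.
  have := J_disj R (valid_of hk) (valid_of hk') hne'.
  by move/seteqP => [/(_ x) h _]; case: (h (conj a b)).
- exact: mgg.
- by move=> x _; rewrite lee_fin gg_ge0.
Qed.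

End S8.
Section S9.
Variable R : realType.
Local Notation mu := (@lebesgue_measure R).
Local Notation r := (rr R).

Lemma ser_geo (u : nat -> R) (a z : R) : `|z| < 1 -> (forall i, u i = a * z ^+ i) ->
  (fun N : nat => \sum_(0 <= m < N) u m) @ \oo --> a * (1 - z)^-1.
Proof.
move=> hz hu.
have -> : (fun N : nat => \sum_(0 <= m < N) u m) = series (geometric a z).
  apply/funext => N; rewrite /series /=; apply: eq_bigr => i _.
  by rewrite hu.
exact: cvg_geometric_series.
Qed.

Lemma part_M : (fun N : nat => \sum_(0 <= m < N) (2%:R ^+ m / rr R ^+ m.+1)) @ \oo --> MM R.
Proof.
have r0 := r_gt0 R; have r2 := r_gt2 R.
have hz : `|2%:R / r| < 1.
  by rewrite ger0_norm ?divr_ge0 ?ltW// ltr_pdivrMr// mul1r.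
have := @ser_geo _ (r^-1) (2%:R / r) hz.
have -> : r^-1 * (1 - 2%:R / r)^-1 = MM R.
  rewrite /MM; field.
  by rewrite !gt_eqF// ?subr_gt0// ?r0.
apply => i.
by rewrite exprS expr_div_n invfM mulrCA mulrA.
Qed.

Lemma ser1 : (\sum_(i <oo) (((2 ^ i)%:R * (3%:R ^+ i.+1)^-1)%:E : \bar R) = 1)%E.
Proof.
pose u i : R := (2 ^ i)%:R * (3%:R ^+ i.+1)^-1.
have hz : `|2%:R / 3%:R : R| < 1.
  by rewrite ger0_norm ?divr_ge0// ltr_pdivrMr// mul1r ltr_nat.
have cu := @ser_geo u (3%:R^-1) (2%:R / 3%:R) hz.
have hu : forall i, u i = 3%:R^-1 * (2%:R / 3%:R) ^+ i.
  by move=> i; rewrite /u exprS expr_div_n invfM natrX mulrCA mulrA.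
have cu' := cu hu.
transitivity (limn (EFin \o (fun N : nat => \sum_(0 <= m < N) u m))).
  by apply/congr_lim/funext => n /=; rewrite sumEFin.
rewrite EFin_lim; last by apply/cvg_ex; eexists; exact: cu'.
rewrite (cvg_lim _ cu') //; congr (_%:E).
by field.
Qed.

Lemma gg_max n k : valid_index (n, k) ->
  (exists2 x, J R n k x & gg x = 2%:R * Num.sqrt (LJ R n k)) /\
  (forall x, J R n k x -> gg x <= 2%:R * Num.sqrt (LJ R n k)).
Proof.
move=> v; rewrite LJ_eq.
have L0 := len_gt0 R n; have L := Jlen R n k; have ab := Jlt R n k.
have hs : Num.sqrt (len R n) ^+ 2 = len R n by rewrite sqr_sqrtr ?ltW.
have s0 : 0 < Num.sqrt (len R n) by rewrite sqrtr_gt0.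
have key : 4%:R / Num.sqrt (len R n) * (len R n / 2%:R) = 2%:R * Num.sqrt (len R n).
  move: hs s0; set s := Num.sqrt (len R n) => hs s0.
  rewrite -hs; field; by rewrite gt_eqF.
split.
  exists (Jmid R n k).
    by apply/J_mem; rewrite /Jleft /Jright; apply/andP; split; 
      rewrite ?ltrBlDr ?ltrDl divr_gt0.
  rewrite (gg_J v); last first.
    by apply/J_mem; rewrite /Jleft /Jright; apply/andP; split; 
      rewrite ?ltrBlDr ?ltrDl divr_gt0.
  rewrite -key; congr (_ * _).
  by rewrite /Jleft /Jright opprB addrC subrK addrAC subrr add0r min_l.
move=> x jx; rewrite (gg_J v jx) -key ler_pM2l ?divr_gt0//.
move/J_mem: jx => /andP[h1 h2].
rewrite ge_min; case: (leP (x - Jleft R n k) (len R n / 2%:R)) => //= h.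
lra.
Qed.

Lemma gg_zero (x : R) : (gg x = 0 <-> ~ (exists nk, valid_index nk /\ J R nk.1 nk.2 x)).
Proof.
split.
  move=> h [[n k] [v jx]]; move: h; rewrite (gg_J v jx).
  have L0 := len_gt0 R n.
  move/J_mem: jx => /andP[h1 h2].
  have pos : 0 < 4%:R / Num.sqrt (len R n) * Num.min (x - Jleft R n k) (Jright R n k - x).
    by rewrite mulr_gt0 ?divr_gt0 ?sqrtr_gt0 // lt_min !subr_gt0 h1 h2.
  by move=> e; rewrite e ltxx in pos.
move=> h; apply: gg_out => n k v jx; apply: h; by exists (n, k).
Qed.

Definition DD : set R := \bigcup_i Fn i.

Lemma DD_mem x : DD x <-> exists nk, valid_index nk /\ J R nk.1 nk.2 x.
Proof.
split.
  move=> [i _ /Fn_mem [k [hk jx]]]; exists (i.+1, k.+1); split => //.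
move=> [nk [/valid_ex [m [i [e hi]]] jx]]; rewrite e /= in jx.
by exists m => //; apply/Fn_mem; exists i.
Qed.

Lemma int_total : (\int[mu]_(x in `[0%R, MM R]) (gg x)%:E = 1)%E.
Proof.
have D01 : DD `<=` `[0%R, MM R].
  move=> x /DD_mem [[n k] [v jx]]; have /andP[h1 h2] := J_sub01 v jx.
  by rewrite /= in_itv /= (ltW h1) (ltW h2).
have mF i : measurable (Fn (R := R) i) by apply: bigsetU_measurable => k _; exact: measurable_itv.
have mD : measurable DD by rewrite /DD; apply: bigcupT_measurable => i; exact: mF.
rewrite -(setDUK D01) integral_setU //; last 3 first.
- by apply: measurableD => //; exact: measurable_itv.
- exact: mgg.
- by rewrite disj_set2E setDIK.
rewrite [X in (_ + X)%E]integral0_eq; last first.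
  by move=> x [_ nD]; rewrite /= gg_out// => n k v jx; apply: nD; apply/DD_mem; exists (n, k).
rewrite adde0 /DD ge0_integral_bigcup //; last 3 first.
- exact: mgg.
- by move=> x _; rewrite lee_fin gg_ge0.
- move=> i j _ _ [x [/Fn_mem [k [hk a]] /Fn_mem [k' [hk' b]]]].
  case: (eqVneq i j) => // /eqP hne.
  have hne' : (i.+1, k.+1) <> (j.+1, k'.+1) by case.
  have := J_disj R (valid_of hk) (valid_of hk') hne'.
  by move/seteqP => [/(_ x) h _]; case: (h (conj a b)).
rewrite -ser1; apply: eq_eseriesr => i _.
exact: int_Fn.
Qed.

End S9.

Unset Implicit Arguments.

Theorem lemma3 (R : realType) :
  (* M = sum_{n>=1} 2^(n-1) / (3^(2/3))^n *)
  ((fun N : nat => \sum_(0 <= m < N) (2%:R ^+ m / rr R ^+ m.+1)) @ \oo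
     --> MM R) /\
  (* the intervals J_n^k are pairwise disjoint *)
  (forall n k n' k' : nat, valid_index (n, k) -> valid_index (n', k') ->
     (n, k) <> (n', k') -> J R n k `&` J R n' k' = set0) /\
  (* g takes values in [0, oo) *)
  (forall x : R, x \in `[0, MM R] -> 0 <= gg x) /\
  (* (1) *)
  (forall n k : nat, valid_index (n, k) ->
     (exists2 x, J R n k x & gg x = 2%:R * Num.sqrt (LJ R n k)) /\
     (forall x, J R n k x -> gg x <= 2%:R * Num.sqrt (LJ R n k))) /\
  (* (2) *)
  (forall x : R, x \in `[0, MM R] -> (gg x = 0 <-> AA R x)) /\
  (* (3) *)
  (forall n k : nat, valid_index (n, k) ->
     ((\int[@lebesgue_measure R]_(x in J R n k) (gg x)%:E)%E = (LJ R n k `^ (3%:R / 2%:R))%:E) /\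
     LJ R n k `^ (3%:R / 2%:R) = (3%:R ^+ n)^-1) /\
  ((\int[@lebesgue_measure R]_(x in `[0%R, MM R]) (gg x)%:E)%E = 1%E) /\
  (* (4) g is 1/2-Hoelder on [0, M] *)
  (exists C : R, forall x y : R, x \in `[0, MM R] -> y \in `[0, MM R] ->
     `|gg x - gg y| <= C * Num.sqrt `|x - y|).
Proof.
split; first exact: part_M.
split; first exact: J_disj.
split; first by move=> x _; exact: gg_ge0.
split; first exact: gg_max.
split.
  move=> x hx; rewrite gg_zero /AA; split.
    by move=> h; split => //=; rewrite inE in hx.
  by move=> [].
split; first by move=> n k v; rewrite LJ32 int_J3.
split; first exact: int_total.
by exists 4%:R => x y _ _; exact: holder.
Qed.
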